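(* If a closure model $\mathcal{M}=((X,\mathcal{C}_R),\mathcal{V})$ is quasi-discrete, finitely closed and finitely backward closed, then for all $x_1,x_2\in X$: $x_1\simeq x_2$ iff $x_1\equiv_{SLCS}x_2$.
   Context: Quasi-discrete closure model: $\mathcal{C}_R(A)=A\cup\{x\mid\exists a\in A.\ aRx\}$, $\vec{\mathcal{C}}(x)=\mathcal{C}_R(\{x\})$, $\overleftarrow{\mathcal{C}}(x)=\mathcal{C}_{R^{-1}}(\{x\})$, $\mathcal{V}:AP\to\mathcal{P}(X)$, $\mathcal{V}^{-1}(x)=\{p\mid x\in\mathcal{V}(p)\}$; finitely (backward) closed: every $\vec{\mathcal{C}}(x)$ (resp. $\overleftarrow{\mathcal{C}}(x)$) is finite. Path: $\pi:\mathbb{N}\to X$ with $\pi[\mathcal{C}_{succ}(N)]\subseteq\mathcal{C}_R(\pi[N])$ for all $N\subseteq\mathbb{N}$, $\mathcal{C}_{succ}$ the closure based on $n\mapsto n+1$. SLCS: $\Phi::=p\mid\neg\Phi\mid\Phi\lor\Phi\mid\vec\rho\,\Phi_1[\Phi_2]\mid\overleftarrow\rho\,\Phi_1[\Phi_2]$; $x\models\vec\rho\,\Phi_1[\Phi_2]$ iff some path $\pi$ and $\ell$ have $\pi(0)=x$, $\pi(\ell)\models\Phi_1$, $\pi(j)\models\Phi_2$ for $0<j<\ell$; $x\models\overleftarrow\rho\,\Phi_1[\Phi_2]$ iff some path $\pi$ and $\ell$ have $\pi(\ell)=x$, $\pi(0)\models\Phi_1$, $\pi(j)\models\Phi_2$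 for $0<j<\ell$. $\equiv_{SLCS}$: same SLCS formulas. $\simeq$: union of all non-empty equivalence relations $B$ with $(x_1,x_2)\in B\Rightarrow\mathcal{V}^{-1}(x_1)=\mathcal{V}^{-1}(x_2)$ and for all $C\in X/B$, $\vec{\mathcal{C}}(x_1)\cap C\neq\emptyset\iff\vec{\mathcal{C}}(x_2)\cap C\neq\emptyset$ and $\overleftarrow{\mathcal{C}}(x_1)\cap C\neq\emptyset\iff\overleftarrow{\mathcal{C}}(x_2)\cap C\neq\emptyset$. *)

(* Defs.v *)
From Stdlib Require Import List Arith.
Set Implicit Arguments.

Section QDCM.
Variables (X AP : Type) (R : X -> X -> Prop) (V : AP -> X -> Prop).

Definition closureR (Rel : X -> X -> Prop) (A : X -> Prop) : X -> Prop :=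
  fun x => A x \/ exists a, A a /\ Rel a x.

Definition conv (Rel : X -> X -> Prop) : X -> X -> Prop := fun x y => Rel y x.

Definition fwdC (x : X) : X -> Prop := closureR R (fun y => y = x).
Definition bwdC (x : X) : X -> Prop := closureR (conv R) (fun y => y = x).

Definition finite_set (A : X -> Prop) : Prop :=
  exists l : list X, forall y, A y -> In y l.

Definition finitely_closed : Prop := forall x, finite_set (fwdC x).
Definition finitely_backward_closed : Prop := forall x, finite_set (bwdC x).

Definition Vinv (x : X) : AP -> Prop := fun p => V p x.

Definition Csucc (N : nat -> Prop) : nat -> Prop :=
  fun m => N m \/ exists n, N n /\ S n = m.

Definition image (pi : nat -> X) (N : nat -> Prop) : X -> Prop :=
  fun y => exists n, N n /\ pi n = y.

Definition is_path (pi : nat -> X) : Prop :=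
  forall N : nat -> Prop, forall y, image pi (Csucc N) y -> closureR R (image pi N) y.

End QDCM.

Inductive slcs (AP : Type) : Type :=
| Atom : AP -> slcs AP
| Neg : slcs AP -> slcs AP
| Or : slcs AP -> slcs AP -> slcs AP
| RhoF : slcs AP -> slcs AP -> slcs AP
| RhoB : slcs AP -> slcs AP -> slcs AP.

Fixpoint sat (X AP : Type) (R : X -> X -> Prop) (V : AP -> X -> Prop)
  (phi : slcs AP) (x : X) : Prop :=
  match phi with
  | Atom p => V p x
  | Neg f => ~ sat R V f x
  | Or f g => sat R V f x \/ sat R V g x
  | RhoF f1 f2 => exists (pi : nat -> X) (l : nat),
      is_path R pi /\ pi 0 = x /\ sat R V f1 (pi l) /\
      (forall j, 0 < j -> j < l -> sat R V f2 (pi j))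
  | RhoB f1 f2 => exists (pi : nat -> X) (l : nat),
      is_path R pi /\ pi l = x /\ sat R V f1 (pi 0) /\
      (forall j, 0 < j -> j < l -> sat R V f2 (pi j))
  end.

Definition slcs_equiv (X AP : Type) (R : X -> X -> Prop) (V : AP -> X -> Prop)
  (x1 x2 : X) : Prop :=
  forall phi : slcs AP, sat R V phi x1 <-> sat R V phi x2.

Definition equivalence_rel (X : Type) (B : X -> X -> Prop) : Prop :=
  (forall x, B x x) /\ (forall x y, B x y -> B y x) /\
  (forall x y z, B x y -> B y z -> B x z).

Definition is_class (X : Type) (B : X -> X -> Prop) (C : X -> Prop) : Prop :=
  exists z, forall y, C y <-> B z y.

Definition CMC_bisim_rel (X AP : Type) (R : X -> X -> Prop) (V : AP -> X -> Prop)
  (B : X -> X -> Prop) : Prop :=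
  equivalence_rel B /\ (exists a b, B a b) /\
  forall x1 x2, B x1 x2 ->
    (forall p, Vinv V x1 p <-> Vinv V x2 p) /\
    forall C : X -> Prop, is_class B C ->
      ((exists y, fwdC R x1 y /\ C y) <-> (exists y, fwdC R x2 y /\ C y)) /\
      ((exists y, bwdC R x1 y /\ C y) <-> (exists y, bwdC R x2 y /\ C y)).

Definition cmc_bisimilar (X AP : Type) (R : X -> X -> Prop) (V : AP -> X -> Prop)
  (x1 x2 : X) : Prop :=
  exists B, CMC_bisim_rel R V B /\ B x1 x2.

(* Main.v *)
Require Import Defs.
From Stdlib Require Import List Arith Lia Classical.

Section Proofs.
Variables (X AP : Type) (R : X -> X -> Prop) (V : AP -> X -> Prop).

Lemma path_step (pi : nat -> X) :
  is_path R pi <-> forall n, pi (S n) = pi n \/ R (pi n) (pi (S n)).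
Proof.
  split.
  - intros H n.
    destruct (H (fun m => m = n) (pi (S n))) as [[m [Hm Hpm]] | [a [[m [Hm Hpm]] Ha]]].
    + exists (S n). split; [right; exists n; auto | auto].
    + subst m. left; auto.
    + subst m a. right; auto.
  - intros H N y [m [[Nm | [n [Nn Hs]]] Hpy]].
    + left. exists m; auto.
    + subst m. destruct (H n) as [E|E].
      * left. exists n. split; auto. rewrite <- Hpy, E; auto.
      * right. exists (pi n). split; [exists n; auto | subst y; auto].
Qed.

Section Sound.
Variable B : X -> X -> Prop.
Hypothesis HB : CMC_bisim_rel R V B.

Lemma Brefl x : B x x. Proof. destruct HB as [[H _] _]; auto. Qed.
Lemma Bsym x y : B x y -> B y x. Proof. destruct HB as [[_ [H _]] _]; auto. Qed.

Lemma cls_self z : is_class B (B z).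
Proof. exists z; intro; tauto. Qed.

Lemma fwd_path : forall l pi x2, is_path R pi -> B (pi 0) x2 ->
  exists pi', is_path R pi' /\ pi' 0 = x2 /\ forall j, j <= l -> B (pi j) (pi' j).
Proof.
  induction l; intros pi x2 Hp H0.
  - exists (fun _ => x2). split; [apply path_step; auto|]. split; auto.
    intros j Hj. assert (j = 0) by lia. subst; auto.
  - destruct HB as [_ [_ Hc]]. destruct (Hc _ _ H0) as [_ Hcl].
    destruct (Hcl (B (pi 1)) (cls_self (pi 1)))
      as [[Hf _] _].
    destruct Hf as [y [Hy By]].
    { exists (pi 1). split; [|apply Brefl].
      destruct (proj1 (path_step pi) Hp 0) as [E|E]; [left; auto | right; exists (pi 0); auto]. }
    assert (Hp' : is_path R (fun n => pi (S n))).
    { apply path_step. intro n. apply (proj1 (path_step pi) Hp (S n)). }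
    destruct (IHl (fun n => pi (S n)) y Hp' By) as [pi'' [Hp'' [E0 HBj]]].
    exists (fun n => match n with 0 => x2 | S k => pi'' k end).
    split; [|split; auto].
    + apply path_step. intros [|n].
      * rewrite E0. destruct Hy as [Hy | [a [Ha Hr]]]; [left; auto | right; subst; auto].
      * apply (proj1 (path_step _) Hp'' n).
    + intros [|j] Hj; auto. apply HBj. lia.
Qed.

Lemma bwd_path : forall l pi x2, is_path R pi -> B (pi l) x2 ->
  exists pi', is_path R pi' /\ pi' l = x2 /\ forall j, j <= l -> B (pi j) (pi' j).
Proof.
  induction l; intros pi x2 Hp H0.
  - exists (fun _ => x2). split; [apply path_step; auto|]. split; auto.
    intros j Hj. assert (j = 0) by lia. subst; auto.
  - destruct HB as [_ [_ Hc]]. destruct (Hc _ _ H0) as [_ Hcl].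
    destruct (Hcl (B (pi l)) (cls_self (pi l)))
      as [_ [Hf _]].
    destruct Hf as [y [Hy By]].
    { exists (pi l). split; [|apply Brefl].
      destruct (proj1 (path_step pi) Hp l) as [E|E];
        [left; auto | right; exists (pi (S l)); split; auto]. }
    destruct (IHl pi y Hp By) as [pi'' [Hp'' [E0 HBj]]].
    exists (fun j => if le_lt_dec j l then pi'' j else x2).
    split; [|split].
    + apply path_step. intro n.
      destruct (le_lt_dec (S n) l); destruct (le_lt_dec n l); try lia.
      * apply (proj1 (path_step _) Hp'' n).
      * assert (n = l) by lia. subst n. rewrite E0.
        destruct Hy as [Hy | [a [Ha Hr]]]; [left; auto | right; subst; auto].
      * left; auto.
    + destruct (le_lt_dec (S l) l); [lia|auto].
    + intros j Hj. destruct (le_lt_dec j l).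
      * apply HBj; auto.
      * assert (j = S l) by lia. subst; auto.
Qed.

Lemma sound : forall phi x y, B x y -> sat R V phi x -> sat R V phi y.
Proof.
  induction phi; intros x y Bxy H; simpl in *.
  - destruct HB as [_ [_ Hc]]. destruct (Hc _ _ Bxy) as [Hv _]. apply Hv; auto.
  - intro Hy. apply H. apply (IHphi y x); auto. apply Bsym; auto.
  - destruct H; [left; eapply IHphi1 | right; eapply IHphi2]; eauto.
  - destruct H as [pi [l [Hp [H0 [H1 H2]]]]].
    subst x. destruct (fwd_path l pi y Hp Bxy) as [pi' [Hp' [E HBj]]].
    exists pi', l. repeat split; auto.
    + eapply IHphi1; eauto.
    + intros j Hj Hjl. eapply IHphi2; [apply HBj; lia | auto].
  - destruct H as [pi [l [Hp [H0 [H1 H2]]]]].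
    subst x. destruct (bwd_path l pi y Hp Bxy) as [pi' [Hp' [E HBj]]].
    exists pi', l. repeat split; auto.
    + eapply IHphi1; [apply HBj; lia|]; eauto.
    + intros j Hj Hjl. eapply IHphi2; [apply HBj; lia | auto].
Qed.
End Sound.

Definition And (a b : slcs AP) := Neg (Or (Neg a) (Neg b)).

Lemma distinguish z y : ~ slcs_equiv R V z y ->
  exists phi, sat R V phi z /\ ~ sat R V phi y.
Proof.
  intro H. apply not_all_ex_not in H. destruct H as [phi Hp].
  destruct (classic (sat R V phi z)) as [Hz|Hz].
  - exists phi. split; auto. intro Hy. apply Hp; tauto.
  - exists (Neg phi). simpl. split; auto. intro Hy. apply Hy.
    destruct (classic (sat R V phi y)); auto. exfalso; apply Hp; tauto.
Qed.

Lemma build (P : X -> Prop) z T (HT : sat R V T z)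
  (Hd : forall y, P y -> exists phi, sat R V phi z /\ ~ sat R V phi y) :
  forall l, exists Phi, sat R V Phi z /\ forall y, In y l -> P y -> ~ sat R V Phi y.
Proof.
  induction l as [|a l IH].
  - exists T. split; [auto | intros y []].
  - destruct IH as [Phi [Hz Hl]].
    destruct (classic (P a)) as [Pa|Pa].
    + destruct (Hd a Pa) as [phi [Hpz Hpa]].
      exists (And Phi phi). split.
      * simpl. intros [h|h]; auto.
      * intros y [<-|Hy] Py; simpl; intro Hs; apply Hs; [right; auto | left; apply (Hl y Hy Py)].
    + exists Phi. split; auto. intros y [<-|Hy] Py; [contradiction|auto].
Qed.

Lemma fwd_transfer (Hfin : finitely_closed R) x1 x2 (E : slcs_equiv R V x1 x2) z :
  (exists y, fwdC R x1 y /\ slcs_equiv R V z y) ->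
  exists y, fwdC R x2 y /\ slcs_equiv R V z y.
Proof.
  intros [w [Hw Ew]]. apply NNPP. intro Hno.
  assert (Hd : forall y, fwdC R x2 y -> exists phi, sat R V phi z /\ ~ sat R V phi y).
  { intros y Hy. apply distinguish. intro Hz. apply Hno. eauto. }
  destruct (Hd x2 (or_introl eq_refl)) as [psi [Hpsi _]].
  set (T := Or psi (Neg psi)).
  assert (HT : sat R V T z) by (simpl; auto).
  destruct (Hfin x2) as [l Hl].
  destruct (build _ _ _ HT Hd l) as [Phi [HPz HPl]].
  assert (Hbot : forall u, ~ sat R V (Neg T) u).
  { intros u H. apply H. simpl. destruct (classic (sat R V psi u)); auto. }
  assert (H1 : sat R V (RhoF Phi (Neg T)) x1).
  { exists (fun n => match n with 0 => x1 | _ => w end), 1. repeat split.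
    - apply path_step. intros [|n]; [|left; auto].
      destruct Hw as [Hw|[a [Ha Hr]]]; [left; auto | right; subst; auto].
    - apply Ew; auto.
    - intros j Hj Hj1. lia. }
  apply E in H1. destruct H1 as [pi [k [Hp [H0 [Hk Hj]]]]].
  assert (Hin : fwdC R x2 (pi k)).
  { destruct k as [|[|k]].
    - left; auto.
    - destruct (proj1 (path_step pi) Hp 0) as [Es|Es].
      + left. rewrite Es; auto.
      + right. exists (pi 0); auto.
    - exfalso. apply (Hbot (pi 1)). apply Hj; lia. }
  apply (HPl (pi k) (Hl _ Hin) Hin Hk).
Qed.

Lemma bwd_transfer (Hfin : finitely_backward_closed R) x1 x2 (E : slcs_equiv R V x1 x2) z :
  (exists y, bwdC R x1 y /\ slcs_equiv R V z y) ->
  exists y, bwdC R x2 y /\ slcs_equiv R V z y.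
Proof.
  intros [w [Hw Ew]]. apply NNPP. intro Hno.
  assert (Hd : forall y, bwdC R x2 y -> exists phi, sat R V phi z /\ ~ sat R V phi y).
  { intros y Hy. apply distinguish. intro Hz. apply Hno. eauto. }
  destruct (Hd x2 (or_introl eq_refl)) as [psi [Hpsi _]].
  set (T := Or psi (Neg psi)).
  assert (HT : sat R V T z) by (simpl; auto).
  destruct (Hfin x2) as [l Hl].
  destruct (build _ _ _ HT Hd l) as [Phi [HPz HPl]].
  assert (Hbot : forall u, ~ sat R V (Neg T) u).
  { intros u H. apply H. simpl. destruct (classic (sat R V psi u)); auto. }
  assert (H1 : sat R V (RhoB Phi (Neg T)) x1).
  { exists (fun n => match n with 0 => w | _ => x1 end), 1. repeat split.
    - apply path_step. intros [|n]; [|left; auto].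
      destruct Hw as [Hw|[a [Ha Hr]]]; [left; auto | right; subst; auto].
    - apply Ew; auto.
    - intros j Hj Hj1. lia. }
  apply E in H1. destruct H1 as [pi [k [Hp [H0 [Hk Hj]]]]].
  assert (Hin : bwdC R x2 (pi 0)).
  { destruct k as [|[|k]].
    - left; auto.
    - destruct (proj1 (path_step pi) Hp 0) as [Es|Es].
      + left. rewrite <- Es; auto.
      + right. exists (pi 1). split; auto.
    - exfalso. apply (Hbot (pi 1)). apply Hj; lia. }
  apply (HPl (pi 0) (Hl _ Hin) Hin Hk).
Qed.

End Proofs.

Theorem theorem2 (X AP : Type) (R : X -> X -> Prop) (V : AP -> X -> Prop) :
  finitely_closed R -> finitely_backward_closed R ->
  forall x1 x2 : X, cmc_bisimilar R V x1 x2 <-> slcs_equiv R V x1 x2.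
Proof.
  intros Hf Hb x1 x2. split.
  - intros [B [HB Bx]] phi. split; [apply (@sound _ _ R V B HB phi _ _ Bx) | apply (@sound _ _ R V B HB phi _ _ (@Bsym _ _ R V B HB _ _ Bx))].
  - intro E. exists (slcs_equiv R V). split; auto.
    assert (Heq : equivalence_rel (slcs_equiv R V)).
    { split; [|split]; unfold slcs_equiv.
      - intros; tauto.
      - intros x y H phi; specialize (H phi); tauto.
      - intros x y w H1 H2 phi; specialize (H1 phi); specialize (H2 phi); tauto. }
    destruct Heq as [Hr [Hs Ht]].
    split; [split; auto|split; [exists x1, x1; auto|]].
    intros y1 y2 Ey. split.
    + intro p. apply (Ey (Atom p)).
    + intros C [z Hz].
      assert (HC : forall P : X -> Prop,
        (exists y, P y /\ C y) <-> (exists y, P y /\ slcs_equiv R V z y)).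
      { intro P. split; intros [y [Py Cy]]; exists y; split; auto; apply Hz; auto. }
      rewrite !HC. split; split.
      * apply fwd_transfer; auto.
      * apply fwd_transfer; auto.
      * apply bwd_transfer; auto.
      * apply bwd_transfer; auto.
Qed.
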